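(* Let $\tilde{Q}$ be a finite connected quandle and $p:\tilde{Q}\to Q$ a covering. If $\Lambda$ is a subgroup of $\mathrm{Aut}(p)$ which acts transitively on each fiber of $p$, then $\Lambda=\mathrm{Aut}(p)$ and each fiber has cardinality $|\Lambda|$.
   Context: A quandle is a set with operation $*$ satisfying $a*a=a$; unique right division; $(a*b)*c=(a*c)*(b*c)$. $R_a(y)=y*a$; connected means the group generated by the $R_a$ acts transitively. A covering is a quandle epimorphism $p:\tilde Q\to Q$ with $p(y_1)=p(y_2)\Rightarrow R_{y_1}=R_{y_2}$; $\mathrm{Aut}(p)$ is the group of automorphisms $\lambda$ of $\tilde Q$ with $p\circ\lambda=p$. *)

(* Defs.v *)
From mathcomp Require Import all_boot all_fingroup.
Set Implicit Arguments. Unset Strict Implicit. Unset Printing Implicit Defensive.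
Local Open Scope group_scope.

Definition is_quandle (T : Type) (op : T -> T -> T) : Prop :=
  [/\ forall a, op a a = a,
      forall a, bijective (fun y => op y a)
    & forall a b c, op (op a b) c = op (op a c) (op b c)].

Definition right_transl (T : finType) (op : T -> T -> T) : {set {perm T}} :=
  [set g : {perm T} | [exists a, [forall y, g y == op y a]]].

Definition Inn (T : finType) (op : T -> T -> T) : {group {perm T}} :=
  <<right_transl op>>%G.

Definition connected_quandle (T : finType) (op : T -> T -> T) : Prop :=
  [transitive Inn op, on [set: T] | 'P].

Definition is_covering (T Q : Type) (opT : T -> T -> T) (opQ : Q -> Q -> Q)
  (p : T -> Q) : Prop :=
  [/\ forall x y, p (opT x y) = opQ (p x) (p y),
      forall q, exists x, p x = q
    & forall y1 y2, p y1 = p y2 -> forall z, opT z y1 = opT z y2].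

Definition Autp (T : finType) (Q : eqType) (opT : T -> T -> T) (p : T -> Q)
  : {set {perm T}} :=
  [set l : {perm T} | [forall x, forall y, l (opT x y) == opT (l x) (l y)]
                      && [forall x, p (l x) == p x]].

Definition fiber (T : finType) (Q : eqType) (p : T -> Q) (q : Q) : {set T} :=
  [set x | p x == q].

(* Main.v *)
Require Import Defs.
From mathcomp Require Import all_boot all_fingroup.
Set Implicit Arguments. Unset Strict Implicit.
Local Open Scope group_scope.

Lemma autp_eq (T Q : finType) (opT : T -> T -> T) (opQ : Q -> Q -> Q)
  (p : T -> Q) (l m : {perm T}) (x0 : T) :
  connected_quandle opT -> is_covering opT opQ p ->
  l \in Autp opT p -> m \in Autp opT p -> l x0 = m x0 -> l = m.
Proof.
move=> conn [_ _ cov].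
have commI : forall k, k \in Autp opT p -> forall g, g \in Inn opT ->
    forall y, k (g y) = g (k y).
  move=> k /setIdP[/forallP hk1 /forallP hk2] g gI y.
  have : g \in 'C[k].
    apply: subsetP gI; rewrite /Inn gen_subG; apply/subsetP => r.
    rewrite inE => /existsP[a /forallP ra]; apply/cent1P.
    apply/permP => z; rewrite !permM.
    rewrite (eqP (ra z)) (eqP (ra (k z))).
    move: (hk1 z) => /forallP /(_ a) /eqP ->.
    apply: cov; exact/eqP.
  move/cent1P => c; have := congr1 (fun f : {perm T} => f y) c.
  by rewrite /= !permM.
move=> lA mA e; apply/permP => y.
have : y \in orbit 'P (Inn opT) x0 by rewrite (atransP conn) ?inE.
case/orbitP => g gI <-; rewrite /= (commI l lA g gI) (commI m mA g gI).
by rewrite e.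
Qed.

Theorem mainTheorem13 (T Q : finType) (opT : T -> T -> T) (opQ : Q -> Q -> Q)
  (p : T -> Q) (Lambda : {group {perm T}}) :
  is_quandle opT -> is_quandle opQ -> connected_quandle opT ->
  is_covering opT opQ p ->
  Lambda \subset Autp opT p ->
  (forall x y : T, p x = p y -> exists2 l, l \in Lambda & l x = y) ->
  (Lambda :=: Autp opT p) /\ (forall q : Q, #|fiber p q| = #|Lambda|).
Proof.
move=> _ _ conn cov sub tr.
have pl : forall l, l \in Autp opT p -> forall x, p (l x) = p x.
  by move=> l /setIdP[_ /forallP h] x; apply/eqP.
split.
  apply/eqP; rewrite eqEsubset sub /=; apply/subsetP => l lA.
  case: (pickP T) => [x0 _|none].
    have [m mL e] := tr x0 (l x0) (esym (pl l lA x0)).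
    by rewrite (autp_eq conn cov lA (subsetP sub m mL) (esym e)).
  suff -> : l = 1 by rewrite group1.
  by apply/permP => x; have := none x.
move=> q; have [x px] := (let: And3 _ s _ := cov in s) q.
have -> : fiber p q = [set (l : {perm T}) x | l in Lambda].
  apply/setP => y; rewrite inE; apply/eqP/imsetP.
    by move=> py; have [l lL e] := tr x y (etrans px (esym py)); exists l.
  by case=> l lL ->; rewrite pl ?(subsetP sub).
rewrite card_in_imset // => l m lL mL e.
exact: (autp_eq conn cov (subsetP sub l lL) (subsetP sub m mL) e).
Qed.
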